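(* Let $G$ be a $d$-regular bipartite graph on vertex set $V$, $|V|=n$, whose second largest adjacency eigenvalue is at most $\lambda$, where $0<\lambda<d/2$. Then every nonempty $U\subseteq V$ with $|U|<\frac{\lambda^2n}{d^2}$ satisfies $$|N(U)|>\frac{(d-2\lambda)^2}{4\lambda^2}|U|.$$
   Context: $N(U)$ is the set of vertices not in $U$ having a neighbor in $U$. *)

(* Defs.v *)
From HB Require Import structures.
From mathcomp Require Import all_boot all_order all_algebra.
Set Implicit Arguments. Unset Strict Implicit. Unset Printing Implicit Defensive.
Import Order.TTheory GRing.Theory Num.Theory.
Local Open Scope ring_scope.

Definition simple_graph (V : finType) (adj : rel V) : Prop :=
  symmetric adj /\ irreflexive adj.

Definition regular (V : finType) (adj : rel V) (d : nat) : Prop :=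
  forall v : V, #|[set u | adj v u]| = d.

Definition bipartite (V : finType) (adj : rel V) : Prop :=
  exists A : {set V}, forall u v : V, adj u v -> (u \in A) != (v \in A).

Definition adj_matrix (R : nzRingType) (V : finType) (adj : rel V)
  : 'M[R]_#|V| :=
  \matrix_(i, j) (adj (enum_val i) (enum_val j))%:R.

(* Eigenvalues with multiplicity: the sequence s of roots of the
   characteristic polynomial.  "The second largest eigenvalue is at most l":
   sorting s non-increasingly, the entry of index 1 is <= l. *)
Definition second_eigenvalue_le (R : rcfType) (n : nat) (A : 'M[R]_n) (l : R)
  : Prop :=
  exists s : seq R,
    char_poly A = \prod_(x <- s) ('X - x%:P) /\
    nth 0 (sort (fun x y : R => y <= x) s) 1 <= l.

Definition nbhd (V : finType) (adj : rel V) (U : {set V}) : {set V} :=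
  [set v | (v \notin U) && [exists u in U, adj v u]].

(* Main.v *)
Require Import Defs.
From HB Require Import structures.
From mathcomp Require Import all_boot all_order all_algebra.
From mathcomp Require Import complex.
From mathcomp Require Import ring lra.
Import Order.TTheory GRing.Theory Num.Theory.
Local Open Scope ring_scope.

Lemma charpoly_conj (F : fieldType) n (M P : 'M[F]_n) : P \in unitmx ->
  char_poly (invmx P *m M *m P) = char_poly M.
Proof.
move=> Pu; rewrite /char_poly /char_poly_mx.
set Pi := map_mx polyC (invmx P); set Pp := map_mx polyC P.
have PiPp : Pi *m Pp = 1%:M by rewrite -map_mxM mulVmx // map_mx1.
have -> : 'X%:M - map_mx polyC (invmx P *m M *m P) =
          Pi *m ('X%:M - map_mx polyC M) *m Pp.
  rewrite mulmxBr mulmxBl !map_mxM -/Pi -/Pp; congr (_ - _).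
  by rewrite scalar_mxC -mulmxA PiPp mulmx1.
by rewrite !det_mulmx mulrAC -det_mulmx PiPp det1 mul1r.
Qed.

Lemma count_sorted_le1 (R : realDomainType) (s : seq R) (l : R) :
  nth 0 (sort (fun x y : R => y <= x) s) 1 <= l ->
  (count (fun x => (l < x)%R) s <= 1)%N.
Proof.
have tr : transitive (fun x y : R => y <= x) by move=> a b c h1 h2; apply: le_trans h2 h1.
have to : total (fun x y : R => y <= x) by move=> a b; apply: le_total.
have := permP (permEl (perm_sort (fun x y : R => y <= x) s)) (fun x => (l < x)%R); move=> <-.
have := sort_sorted to s.
case: (sort _ s) => [|x0 [|x1 t]] //= srt h1.
  by case: (l < x0).
have /andP[_ pt] := srt.
have := order_path_min tr pt => /allP al.
suff -> : count (fun x => l < x) t = 0%N.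
  by rewrite (le_gtF h1) /=; case: (l < x0).
apply/eqP; rewrite -leqn0 leqNgt -has_count; apply/hasPn => y yt.
by rewrite -leNgt; apply: le_trans (al _ yt) h1.
Qed.

Lemma count_enum_le1 (T : finType) (P : pred T) j k :
  (count P (Finite.enum T) <= 1)%N -> P j -> P k -> j = k.
Proof.
move=> h Pj Pk.
have : (#|P| <= 1)%N by rewrite cardE /enum_mem size_filter.
by move/card_le1_eqP; apply.
Qed.

Lemma sum_sel (K : comPzRingType) n (h : 'I_n -> K) (p q : K) a b :
  \sum_j h j * (p + q * ((j == a)%:R + (j == b)%:R)) = p * \sum_j h j + q * (h a + h b).
Proof.
have sel (f : 'I_n -> K) k : \sum_j f j * ((j == k)%:R) = f k.
  rewrite (bigD1 k) //= eqxx mulr1 big1 ?addr0 // => j /negbTE ->.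
  by rewrite mulr0.
under eq_bigr => j _ do rewrite mulrDr mulrDr mulrDr (mulrC (h j) p) (mulrCA (h j) q) (mulrCA (h j) q).
by rewrite big_split big_split /= -!mulr_sumr !sel mulrDr.
Qed.

Section Key.
Local Open Scope sesquilinear_scope.
Variable R : rcfType.
Local Notation C := (R[i]).
Local Notation rc := (real_complex R).

Lemma conjrc (r : R) : (rc r)^* = rc r.
Proof. by apply: conj_Creal; rewrite complex_real. Qed.

Lemma lecR' (k k' : R) : (rc k <= rc k') = (k <= k').
Proof. exact: lecR. Qed.

Lemma rcD (a b : R) : rc (a + b) = rc a + rc b. Proof. exact: rmorphD. Qed.
Lemma rcM (a b : R) : rc (a * b) = rc a * rc b. Proof. exact: rmorphM. Qed.
Lemma rcB (a b : R) : rc (a - b) = rc a - rc b. Proof. exact: rmorphB. Qed.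
Lemma rcn (k : nat) : rc (k%:R) = k%:R. Proof. exact: rmorph_nat. Qed.

Lemma rcN (a : R) : rc (- a) = - rc a. Proof. exact: rmorphN. Qed.
Lemma rcX (a : R) k : rc (a ^+ k) = rc a ^+ k. Proof. exact: rmorphXn. Qed.
Lemma sq_le (m l : R) : - l <= m -> m <= l -> m ^+ 2 <= l ^+ 2.
Proof. move=> h1 h2; nra. Qed.

Lemma key n (A : 'M[R]_n) (s : seq R) (l d : R) (e1 e2 x : 'rV[R]_n) :
  A^T = A ->
  char_poly A = \prod_(y <- s) ('X - y%:P) ->
  char_poly (- A) = char_poly A ->
  (count (fun y => (l < y)%R) s <= 1)%N ->
  0 <= l -> l < d ->
  e1 *m A = d *: e1 -> e2 *m A = - d *: e2 -> e1 != 0 -> e2 != 0 ->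
  \sum_j ((x *m A) 0 j)^+2 <= l^+2 * \sum_j (x 0 j)^+2 +
     (d^+2 - l^+2) * ((\sum_j x 0 j * e1 0 j)^+2 / \sum_j (e1 0 j)^+2
                     + (\sum_j x 0 j * e2 0 j)^+2 / \sum_j (e2 0 j)^+2).
Proof.
move=> Asym chA chN cnt l0 ld He1 He2 e1n0 e2n0.
pose toC m k (M : 'M[R]_(m, k)) := M ^ rc.
pose Ac := toC _ _ A.
have Aher : Ac \is hermsymmx.
  apply/is_hermitianmxP; rewrite expr0 scale1r; apply/matrixP => i j.
  by rewrite !mxE conjrc; have := congr1 (fun M : 'M_n => M i j) Asym; rewrite mxE => ->.
pose P := spectralmx Ac; pose D := spectral_diag Ac.
have Pu : P \is unitarymx := spectral_unitarymx Ac.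
have AcE : Ac = P^t* *m diag_mx D *m P.
  have := orthomx_spectralP (hermitian_normalmx Aher).
  by rewrite -/P -/D invmx_unitary.
pose mu j := complex.Re (D 0 j).
have DE j : D 0 j = rc (mu j).
  have /mxOverP /(_ 0 j) := hermitian_spectral_diag_real Aher.
  by rewrite -/D /mu; case: (D 0 j) => a b; rewrite complex_real => /eqP ->.
have chAc : char_poly Ac = \prod_(y <- s) ('X - (rc y)%:P).
  rewrite -map_char_poly chA rmorph_prod; by apply: eq_bigr => y _; exact: map_polyXsubC.
have chD (E : 'rV[C]_n) : char_poly (P^t* *m diag_mx E *m P) =
    \prod_(y <- map (fun j => E 0 j) (enum 'I_n)) ('X - y%:P).
  rewrite -invmx_unitary // charpoly_conj ?unitarymx_unit // char_poly_trig ?diag_mx_is_trig //.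
  by rewrite big_map big_enum /=; apply: eq_bigr => i _; rewrite mxE eqxx mulr1n.
have pm1 : perm_eq (map mu (enum 'I_n)) s.
  apply: (@perm_map_inj _ _ rc); first exact: complexI.
  apply: prod_XsubC_eq.
  have -> : map rc (map mu (enum 'I_n)) = map (fun j => D 0 j) (enum 'I_n).
    by rewrite -map_comp; apply: eq_map => j; rewrite /= DE.
  by rewrite -chD -AcE chAc big_map.
have pm2 : perm_eq (map (fun j => - mu j) (enum 'I_n)) (map mu (enum 'I_n)).
  apply: (@perm_map_inj _ _ rc); first exact: complexI.
  apply: prod_XsubC_eq.
  have -> : map rc (map mu (enum 'I_n)) = map (fun j => D 0 j) (enum 'I_n).
    by rewrite -map_comp; apply: eq_map => j; rewrite /= DE.
  have -> : map rc (map (fun j => - mu j) (enum 'I_n)) = map (fun j => (- D) 0 j) (enum 'I_n).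
    by rewrite -map_comp; apply: eq_map => j; rewrite /= mxE DE rmorphN.
  rewrite -!chD.
  have <- : - Ac = P^t* *m diag_mx (- D) *m P.
    have -> : diag_mx (- D) = - diag_mx D by apply/matrixP => i j; rewrite !mxE mulNrn.
    by rewrite AcE mulmxN mulNmx.
  by rewrite -AcE /Ac /toC -map_mxN -!map_char_poly chN.
have cntm : (count (fun j => (l < mu j)%R) (enum 'I_n) <= 1)%N.
  by have := permP pm1 (fun y => (l < y)%R); rewrite count_map => ->.
have cntn : (count (fun j => (mu j < - l)%R) (enum 'I_n) <= 1)%N.
  have := permP pm2 (fun y => (y < - l)%R); rewrite !count_map => <-.
  rewrite (eq_count (a2 := fun j => (l < mu j)%R)) => [|j /=]; last by rewrite ltrN2.
  by move: cntm; rewrite enumT.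
have ua j k : (l < mu j)%R -> (l < mu k)%R -> j = k.
  by apply: (@count_enum_le1 _ (fun j => (l < mu j)%R)); move: cntm; rewrite enumT.
have ub j k : (mu j < - l)%R -> (mu k < - l)%R -> j = k.
  by apply: (@count_enum_le1 _ (fun j => (mu j < - l)%R)); move: cntn; rewrite enumT.
pose hat (v : 'rV[R]_n) := toC _ _ v *m P^t*.
have AcE' : A ^ rc = P^t* *m diag_mx D *m P := AcE.
have hatA v : hat (v *m A) = hat v *m diag_mx D.
  by rewrite /hat /toC map_mxM AcE' !mulmxA mulmxtVK.
have hatip u v : toC _ _ u *m (toC _ _ v)^t* = hat u *m (hat v)^t*.
  by rewrite /hat trmx_mul map_mxM trmxCK mulmxA mulmxKtV.
have ipE (u v : 'rV[R]_n) : (toC _ _ u *m (toC _ _ v)^t*) 0 0 = rc (\sum_j u 0 j * v 0 j).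
  rewrite !mxE rmorph_sum; apply: eq_bigr => j _; rewrite !mxE conjrc rmorphM //.
have hipE u v : (hat u *m (hat v)^t*) 0 0 = \sum_j hat u 0 j * (hat v 0 j)^*.
  by rewrite !mxE; apply: eq_bigr => j _; rewrite !mxE.
have eig e c : e *m A = c *: e -> e != 0 ->
    (forall j, hat e 0 j != 0 -> mu j = c) /\ exists a, hat e 0 a != 0.
  move=> He en0; split.
    move=> j hj; apply: complexI; rewrite -DE.
    have := congr1 (fun M : 'rV_n => M 0 j) (hatA e).
    rewrite He; have -> : hat (c *: e) = rc c *: hat e by rewrite /hat /toC map_mxZ -scalemxAl.
    rewrite mul_mx_diag [LHS]mxE [RHS]mxE => /(congr1 (fun z => z / hat e 0 j)).
    by rewrite mulfK // mulrAC divff // mul1r => ->.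
  have [a ha|h0] := pickP (fun j => hat e 0 j != 0); first by exists a.
  have : hat e = 0 by apply/rowP => j; rewrite [RHS]mxE; apply/eqP/negbFE/h0.
  move=> /(congr1 (fun M => M *m P)); rewrite mul0mx /hat mulmxKtV //.
  by move/eqP; rewrite map_mx_eq0 (negbTE en0).
have d0 : 0 < d by apply: le_lt_trans l0 ld.
have [E1a [a ha]] := eig e1 d He1 e1n0.
have [E2b [b hb]] := eig e2 (- d) He2 e2n0.
have mua : mu a = d := E1a a ha.
have mub : mu b = - d := E2b b hb.
have ab : (a == b) = false.
  apply/eqP => abe; have : mu a = mu b by rewrite abe.
  rewrite mua mub => /eqP; rewrite -subr_eq0 opprK.
  by rewrite gt_eqF // addr_gt0.
have he1z j : j != a -> hat e1 0 j = 0.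
  move=> ja; apply/eqP; rewrite -[_ == 0]negbK; apply/negP => hj.
  by move/eqP: ja; apply; apply: ua; rewrite ?(E1a j hj) ?mua.
have he2z j : j != b -> hat e2 0 j = 0.
  move=> jb; apply/eqP; rewrite -[_ == 0]negbK; apply/negP => hj.
  by move/eqP: jb; apply; apply: ub; rewrite ?(E2b j hj) ?mub ltrN2.
have sel (f : 'I_n -> C) k : \sum_j f j * ((j == k)%:R) = f k.
  rewrite (bigD1 k) //= eqxx mulr1 big1 ?addr0 // => j /negbTE ->.
  by rewrite mulr0.
have nrc (r : R) : rc (r ^+ 2) = `|rc r| ^+ 2 by rewrite normCK conjrc rmorphXn expr2.
have Sx (u : 'rV[R]_n) : rc (\sum_j u 0 j ^+ 2) = \sum_j `|hat u 0 j| ^+ 2.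
  rewrite (eq_bigr (fun j => u 0 j * u 0 j)) => [|j _]; last by rewrite expr2.
  rewrite -ipE hatip hipE; apply: eq_bigr => j _; by rewrite normCK.
have Te (e : 'rV[R]_n) k : (forall j, j != k -> hat e 0 j = 0) -> hat e 0 k != 0 ->
    rc ((\sum_j x 0 j * e 0 j) ^+ 2 / \sum_j (e 0 j) ^+ 2) = `|hat x 0 k| ^+ 2.
  move=> hz hk.
  have s1 : rc (\sum_j x 0 j * e 0 j) = hat x 0 k * (hat e 0 k)^*.
    rewrite -ipE hatip hipE (bigD1 k) //= big1 ?addr0 // => j jk.
    by rewrite hz // conjC0 mulr0.
  have s2 : rc (\sum_j e 0 j ^+ 2) = `|hat e 0 k| ^+ 2.
    rewrite Sx (bigD1 k) //= big1 ?addr0 // => j jk.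
    by rewrite hz // normr0 expr0n.
  rewrite fmorph_div /= s2 nrc s1 normrM norm_conjC exprMn mulfK //.
  by rewrite expf_neq0 // normr_eq0.
have L : rc (\sum_j (x *m A) 0 j ^+ 2) = \sum_j `|hat x 0 j| ^+ 2 * rc (mu j ^+ 2).
  rewrite Sx hatA; apply: eq_bigr => j _.
  by rewrite mul_mx_diag [X in `|X|]mxE DE normrM exprMn nrc.
rewrite -lecR'.
rewrite rcD rcM rcM [rc (_ / _ + _ / _)]rcD (Te e1 a) // (Te e2 b) // L Sx.
pose g j := l ^+ 2 + (d ^+ 2 - l ^+ 2) * ((j == a)%:R + (j == b)%:R).
have gb j : mu j ^+ 2 <= g j.
  rewrite /g; case: (eqVneq j a) => [->|ja].
    by rewrite ab mua /= mulr0n addr0 mulr1n mulr1 addrC subrK lexx.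
  case: (eqVneq j b) => [->|jb].
    by rewrite mub sqrrN /= mulr0n add0r mulr1n mulr1 addrC subrK lexx.
  rewrite /= !mulr0n addr0 mulr0 addr0.
  apply: sq_le.
    rewrite leNgt; apply/negP => hl; move/eqP: jb; apply; apply: ub hl _.
    by rewrite mub ltrN2.
  rewrite leNgt; apply/negP => hl; move/eqP: ja; apply; apply: ua hl _.
  by rewrite mua.
suff E : \sum_j `|hat x 0 j| ^+ 2 * rc (g j) =
    rc (l ^+ 2) * \sum_j `|hat x 0 j| ^+ 2 +
    rc (d ^+ 2 - l ^+ 2) * (`|hat x 0 a| ^+ 2 + `|hat x 0 b| ^+ 2).
  rewrite -E; apply: ler_sum => j _; apply: ler_wpM2l.
    by apply: exprn_ge0; apply: normr_ge0.
  by rewrite lecR'.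
have rcg j : rc (g j) = rc (l ^+ 2) + rc (d ^+ 2 - l ^+ 2) * ((j == a)%:R + (j == b)%:R).
  by rewrite /g rcD rcM [rc (_%:R + _)]rcD !rcn.
under eq_bigr => j _ do rewrite rcg.
exact: sum_sel.
Qed.
End Key.

Lemma arith (R : realFieldType) (N K n d l Q : R) : 0 < l -> 2 * l < d -> 1 <= N -> 0 < n ->
  0 <= K ->
  N < l ^+ 2 * n / d ^+ 2 -> (d * N) ^+ 2 <= (K + N) * Q ->
  Q <= l ^+ 2 * N + (d ^+ 2 - l ^+ 2) * (N ^+ 2 / n + N ^+ 2 / n) ->
  (d - 2 * l) ^+ 2 / (4 * l ^+ 2) * N < K.
Proof.
move=> l0 ld N1 n0 K0 hN hCS hQ.
have d0 : 0 < d by lra.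
have N0 : 0 < N by lra.
have d2 : 0 < d ^+ 2 by rewrite exprn_gt0.
have l2 : 0 < l ^+ 2 by rewrite exprn_gt0.
have hN' : N * d ^+ 2 < l ^+ 2 * n by rewrite -ltr_pdivlMr.
set t := N ^+ 2 / n.
have t0 : 0 <= t by rewrite /t divr_ge0 // ?exprn_ge0 ?ltW.
have htd : t * d ^+ 2 < l ^+ 2 * N.
  rewrite -(ltr_pM2r n0).
  have -> : t * d ^+ 2 * n = N * (N * d ^+ 2) by rewrite /t; field; lra.
  have -> : l ^+ 2 * N * n = N * (l ^+ 2 * n) by ring.
  by rewrite ltr_pM2l.
have tl : 0 <= t * l ^+ 2 by rewrite mulr_ge0 // ltW.
have hQ3 : Q < 3 * (l ^+ 2 * N).
  have e : (d ^+ 2 - l ^+ 2) * (t + t) = 2 * (t * d ^+ 2) - 2 * (t * l ^+ 2) by ring.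
  rewrite e in hQ; lra.
have KN : 0 < K + N by lra.
have h1 : (d * N) ^+ 2 < (K + N) * (3 * (l ^+ 2 * N)) by apply: (le_lt_trans hCS); rewrite ltr_pM2l.
have h2 : d ^+ 2 * N < 3 * l ^+ 2 * (K + N).
  rewrite -(ltr_pM2r N0).
  by move: h1; rewrite exprMn; congr (_ < _); ring.
rewrite mulrAC ltr_pdivrMr; last by rewrite mulr_gt0.
have h3 : 0 <= (d ^+ 2 + 12 * d * l - 24 * l ^+ 2) * N.
  apply: mulr_ge0; last lra.
  nra.
nra.
Qed.

Lemma cs (R : realFieldType) (I : finType) (S : {set I}) (f : I -> R) :
  (\sum_(i in S) f i) ^+ 2 <= #|S|%:R * \sum_(i in S) f i ^+ 2.
Proof.
have H : 0 <= \sum_(i in S) \sum_(j in S) (f i - f j) ^+ 2.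
  by apply: sumr_ge0 => i _; apply: sumr_ge0 => j _; apply: sqr_ge0.
have E : \sum_(i in S) \sum_(j in S) (f i - f j) ^+ 2 =
   \sum_(i in S) (f i ^+ 2 *+ #|S| + \sum_(j in S) f j ^+ 2 - 2 * (f i * \sum_(j in S) f j)).
  apply: eq_bigr => i _.
  rewrite mulr_sumr mulr_sumr -sumr_const -big_split -sumrB /=.
  by apply: eq_bigr => j _; ring.
rewrite E sumrB big_split /= -mulr_sumr -mulr_suml sumr_const sumrMnl in H.
rewrite mulr_natl -subr_ge0 expr2; lra.
Qed.

Lemma pm (R : rcfType) (b c : bool) :
  - (b%:R : R) <= (b%:R : R) * (if c then 1 else -1 : R) <= (b%:R : R).
Proof. by case: b; case: c; rewrite /= ?mulr1n ?mulr0n; apply/andP; split; lra. Qed.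

Lemma sq_mono (R : rcfType) (a b : R) : 0 <= a -> a <= b -> 0 <= b ^+ 2 - a ^+ 2.
Proof. move=> h1 h2; nra. Qed.

Lemma sumV (R : rcfType) (V : finType) (F : V -> R) :
  \sum_(i < #|V|) F (enum_val i) = \sum_v F v.
Proof. by rewrite -(big_enum_val (A := V)). Qed.

Theorem corollary10 (R : rcfType) (V : finType) (adj : rel V) (d : nat) (l : R) :
  simple_graph adj -> regular adj d -> bipartite adj ->
  second_eigenvalue_le (adj_matrix R adj) l ->
  0 < l -> l < d%:R / 2 ->
  forall U : {set V}, U != set0 ->
    #|U|%:R < l ^+ 2 * #|V|%:R / d%:R ^+ 2 ->
    #|nbhd adj U|%:R > (d%:R - 2 * l) ^+ 2 / (4 * l ^+ 2) * #|U|%:R.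

Proof.
move=> [Hsym Hirr] Hreg [Aset Hbip] [s [chA hs]] l0 ld U Un0 hU.
pose A := adj_matrix R adj.
pose ev := @enum_val V (mem V).
have deg v : \sum_u (adj v u)%:R = d%:R :> R.
  rewrite -(Hreg v) -sumr_const [RHS]big_mkcond /=; apply: eq_bigr => u _.
  by rewrite inE; case: (adj v u).
have degl v : \sum_u (adj u v)%:R = d%:R :> R.
  by rewrite -(deg v); apply: eq_bigr => u _; rewrite Hsym.
have Asym : A^T = A by apply/matrixP => i j; rewrite !mxE Hsym.
pose e1 : 'rV[R]_#|V| := const_mx 1.
pose sg v : R := if v \in Aset then 1 else -1.
pose e2 : 'rV[R]_#|V| := \row_j sg (ev j).
pose x : 'rV[R]_#|V| := \row_j ((ev j \in U)%:R).
have He1 : e1 *m A = d%:R *: e1.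
  apply/rowP => j; rewrite !mxE mulr1 (eq_bigr (fun i => (adj (ev i) (ev j))%:R)) => [|i _]; last by rewrite !mxE mul1r.
  by rewrite (@sumV _ _ (fun u => (adj u (ev j))%:R)) degl.
have sgadj u v : adj u v -> sg u = - sg v.
  move=> /Hbip; rewrite /sg; case: (u \in Aset); case: (v \in Aset) => //= _; by rewrite opprK.
have He2 : e2 *m A = - d%:R *: e2.
  apply/rowP => j; rewrite !mxE (eq_bigr (fun i => - sg (ev j) * (adj (ev i) (ev j))%:R)) => [|i _]; last first.
    rewrite !mxE; case: (boolP (adj (ev i) (ev j))) => h; first by rewrite (sgadj _ _ h) !mulr1.
    by rewrite !mulr0.
  rewrite (@sumV _ _ (fun u => - sg (ev j) * (adj u (ev j))%:R)) -mulr_sumr degl.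
  by rewrite mulNr mulNr mulrC.
have [u0 u0U] : exists u, u \in U by apply/set0Pn.
have n0 : (0 < #|V|)%N by apply/card_gt0P; exists u0.
have e1n0 : e1 != 0.
  apply/eqP => /rowP /(_ (Ordinal n0)); rewrite !mxE; apply/eqP; exact: oner_neq0.
have sg2 v : sg v * sg v = 1 by rewrite /sg; case: ifP => _; rewrite ?mulr1 ?mulrNN ?mulr1.
have e2n0 : e2 != 0.
  apply/eqP => /rowP /(_ (Ordinal n0)); rewrite !mxE => h.
  by have := sg2 (ev (Ordinal n0)); rewrite h mulr0 => /eqP; rewrite eq_sym oner_eq0.
have chN : char_poly (- A) = char_poly A.
  pose S := diag_mx e2.
  have SS : S *m S = 1%:M.
    apply/matrixP => i j; rewrite mul_diag_mx !mxE; case: (eqVneq i j) => [->|_].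
      by rewrite !mulr1n sg2.
    by rewrite !mulr0n mulr0.
  have [Su _] := mulmx1_unit SS.
  have iS : invmx S = S.
    by rewrite -[LHS]mulmx1 -SS mulmxA mulVmx // mul1mx.
  rewrite -(@charpoly_conj _ _ A S Su) iS; congr char_poly.
  apply/matrixP => i j; rewrite mul_mx_diag mul_diag_mx !mxE.
  case: (boolP (adj (ev i) (ev j))) => h.
    by rewrite (sgadj _ _ h) /= !mulr1n mulr1 mulNr sg2.
  by rewrite mulr0 mul0r oppr0.
have cnt := @count_sorted_le1 _ _ _ hs.
have ld' : l < d%:R by lra.
have K := @key _ _ _ _ _ _ _ _ x Asym chA chN cnt (ltW l0) ld' He1 He2 e1n0 e2n0.
set N := #|U|%:R.
have cardR (S : {set V}) : \sum_v ((v \in S)%:R : R) = #|S|%:R.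
  rewrite -sumr_const [RHS]big_mkcond /=; apply: eq_bigr => v _; by case: (v \in S).
have sx2 : \sum_j x 0 j ^+ 2 = N.
  rewrite (eq_bigr (fun j => ((ev j \in U)%:R : R))) => [|j _]; last first.
    by rewrite mxE; case: (ev j \in U); rewrite /= ?mulr1n ?mulr0n ?expr1n // expr2 mulr0.
  by rewrite (@sumV _ _ (fun v => ((v \in U)%:R : R))) cardR.
have sx1 : \sum_j x 0 j = N.
  rewrite (eq_bigr (fun j => ((ev j \in U)%:R : R))) => [|j _]; last by rewrite mxE.
  by rewrite (@sumV _ _ (fun v => ((v \in U)%:R : R))) cardR.
have sxe1 : \sum_j x 0 j * e1 0 j = N.
  by rewrite -sx1; apply: eq_bigr => j _; rewrite [e1 0 j]mxE mulr1.
have se1 : \sum_j e1 0 j ^+ 2 = #|V|%:R.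
  rewrite (eq_bigr (fun j => (1 : R))) => [|j _]; last by rewrite mxE expr1n.
  by rewrite sumr_const card_ord.
have se2 : \sum_j e2 0 j ^+ 2 = #|V|%:R.
  rewrite (eq_bigr (fun j => (1 : R))) => [|j _]; last by rewrite mxE expr2 sg2.
  by rewrite sumr_const card_ord.
have sxe2 : (\sum_j x 0 j * e2 0 j) ^+ 2 <= N ^+ 2.
  apply: sq_le.
    rewrite -sx1 -sumrN; apply: ler_sum => j _; rewrite !mxE.
    by have /andP[] := pm R (ev j \in U) (ev j \in Aset).
  rewrite -sx1; apply: ler_sum => j _; rewrite !mxE.
  by have /andP[] := pm R (ev j \in U) (ev j \in Aset).
have dl : 0 <= d%:R ^+ 2 - l ^+ 2 by apply: sq_mono; [exact: ltW | exact: ltW].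
have hQ : \sum_j (x *m A) 0 j ^+ 2 <=
    l ^+ 2 * N + (d%:R ^+ 2 - l ^+ 2) * (N ^+ 2 / #|V|%:R + N ^+ 2 / #|V|%:R).
  apply: (le_trans K); rewrite sx2 sxe1 se1 se2 lerD2l; apply: ler_wpM2l => //.
  rewrite lerD2l; apply: ler_wpM2r => //.
  by rewrite invr_ge0 ler0n.
pose W v : R := \sum_u (u \in U)%:R * (adj u v)%:R.
have xA j : (x *m A) 0 j = W (ev j).
  rewrite !mxE; under eq_bigr => i _ do rewrite !mxE.
  by rewrite (@sumV _ _ (fun u => (u \in U)%:R * (adj u (ev j))%:R)).
have hQW : \sum_j (x *m A) 0 j ^+ 2 = \sum_v W v ^+ 2.
  rewrite (eq_bigr (fun j => W (ev j) ^+ 2)) => [|j _]; last by rewrite xA.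
  by rewrite (@sumV _ _ (fun v => W v ^+ 2)).
have sumW : \sum_v W v = d%:R * N.
  rewrite /W exchange_big /=.
  under eq_bigr => u _ do rewrite -mulr_sumr deg.
  by rewrite -mulr_suml cardR mulrC.
pose T := nbhd adj U :|: U.
have W0 v : v \notin T -> W v = 0.
  rewrite in_setU negb_or => /andP [vN vU]; apply: big1 => u _.
  case: (boolP (u \in U)) => uU; last by rewrite /= mulr0n mul0r.
  case: (boolP (adj u v)) => h; last by rewrite /= mulr0n mulr0.
  move: vN; rewrite /nbhd inE vU /= => /negP; case.
  by apply/existsP; exists u; rewrite uU Hsym h.
have sT : \sum_(v in T) W v = \sum_v W v.
  by rewrite big_mkcond; apply: eq_bigr => v _; case: ifPn => // /W0 ->.
have sT2 : \sum_(v in T) W v ^+ 2 = \sum_v W v ^+ 2.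
  by rewrite big_mkcond; apply: eq_bigr => v _; case: ifPn => // /W0 ->; rewrite expr0n.
have cardT : (#|T| <= #|nbhd adj U| + #|U|)%N := (leq_card_setU _ _).1.
have hCS : (d%:R * N) ^+ 2 <= (#|nbhd adj U|%:R + N) * \sum_v W v ^+ 2.
  rewrite -sumW -sT -sT2; apply: le_trans (cs _ _ _ _) _.
  apply: ler_wpM2r; first by apply: sumr_ge0 => v _; apply: sqr_ge0.
  by rewrite -natrD ler_nat.
apply: (@arith _ N #|nbhd adj U|%:R #|V|%:R d%:R l (\sum_v W v ^+ 2) l0) => //.
- lra.
- by rewrite /N ler1n; apply/card_gt0P; exists u0.
- by rewrite ltr0n.
- by rewrite -hQW.
Qed.
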